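(* Consider the two-period AI value chain game described in the context, and suppose that in period 2 both developers choose openness $\bar\eta$ (so $\eta_2=\tilde\eta_2=\bar\eta$) and the incumbent charges $w_2=w_L$. Define $$\bar{\eta}_H = \frac{k(\theta-w_H)}{2c-k(\theta-w_H)},\qquad \bar{\eta}_L = \frac{k(\theta-w_L)}{2c-k(\theta-w_L)}.$$ (a) $\bar\eta_H\le\bar\eta_L$, and: if the incumbent charges $w_1=w_H$ in period 1, the deployer selects the incumbent in period 2 if and only if $\eta_1\le\bar\eta_H$; if the incumbent charges $w_1=w_L$ in period 1, the deployer selects the incumbent in period 2 if and only if $\eta_1\le\bar\eta_L$. (b) Conditional on the period-2 outcome, the incumbent's total profit is increasing in $\eta_1$: with $\alpha_1=\frac{(1+\eta_1)(\theta-w_1)}{2c}$ and $\alpha_2=\frac{(1+k\alpha_1)(1+\bar\eta)(\theta-w_L)}{2c}$ (the deployer's optimal period-2 effort/engagement when it selects the incumbent), both $\pi_{win}(w_1,\eta_1)=w_1\alpha_1+w_L\alpha_2$ and $\pi_{lose}(w_1,\eta_1)=w_1\alpha_1$ are monotonically increasing in $\eta_1\in[0,\bar\eta]$.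
   Context: Two-period game $t\in\{1,2\}$ with an incumbent developer (developer 1), a deployer, an entrant developer (developer 2), and a unit mass of users. Parameters: $\theta>0$, $c>0$, license fees $0\le w_L\le w_H\le\theta/2$, openness cap $\bar\eta>0$, data flywheel parameter $k\ge 0$. In each period users choose engagement $\alpha_t$ maximizing $Q_t\alpha_t-\alpha_t^2/2$, so $\alpha_t=Q_t$, where $Q_t\ge0$ is the deployer's fine-tuning effort (quality). Period 1: the incumbent chooses a license fee $w_1\in\{w_H,w_L\}$ and openness $\eta_1\in[0,\bar\eta]$; the deployer chooses $Q_1$ to maximize $(\theta-w_1)\alpha_1-\frac{cQ_1^2}{1+\eta_1}$. Period 2: the incumbent chooses $w_2\in\{w_H,w_L\}$ and $\eta_2\in[0,\bar\eta]$; the entrant charges $\tilde w_2=w_L$ and chooses $\tilde\eta_2\in[0,\bar\eta]$. The deployer, for each developer, chooses its effort optimally: with the incumbent its period-2 profit is $(\theta-w_2)Q_2-\frac{cQ_2^2}{(1+k\alpha_1)(1+\eta_2)}$, with the entrant it is $(\theta-w_L)Q_2-\frac{cQ_2^2}{(1+\eta_1)(1+\tilde\eta_2)}$; it selects the incumbent iff the incumbent's optimized profit is at least the entrant's. The incumbent's payoff is $w_1\alpha_1+w_2\alpha_2$ if selected in period 2 and $w_1\alpha_1$ otherwise; the entrant's payoff is $w_L\alpha_2$ if selected and $0$ otherwise. Standing assumption: $k\le\min\Big\{\frac{2c\bar\eta}{(1+\bar\eta)(\theta-w_L)},\ \frac{2c(2\theta-w_H-w_L)(w_H-w_L)}{(\theta-w_H)^2(\theta-w_L)}\Big\}$.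 *)

(* Defs.v *)
From Stdlib Require Import Reals Lra.
Open Scope R_scope.

(* Deployer's period-1 profit given fee w1, openness eta1, effort Q1
   (engagement alpha1 = Q1). *)
Definition dep_profit1 (theta c w1 eta1 Q : R) : R :=
  (theta - w1) * Q - c * Q ^ 2 / (1 + eta1).

Definition dep_profit2_inc (theta c k w2 alpha1 eta2 Q : R) : R :=
  (theta - w2) * Q - c * Q ^ 2 / ((1 + k * alpha1) * (1 + eta2)).

Definition dep_profit2_ent (theta c wL eta1 eta2t Q : R) : R :=
  (theta - wL) * Q - c * Q ^ 2 / ((1 + eta1) * (1 + eta2t)).

Definition is_optimal (f : R -> R) (Q : R) : Prop :=
  0 <= Q /\ forall Q', 0 <= Q' -> f Q' <= f Q.

Definition is_max_value (f : R -> R) (v : R) : Prop :=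
  (exists Q, 0 <= Q /\ f Q = v) /\ forall Q, 0 <= Q -> f Q <= v.

Definition selects_incumbent (theta c k w2 wL alpha1 eta1 eta2 eta2t : R) : Prop :=
  exists vI vE,
    is_max_value (dep_profit2_inc theta c k w2 alpha1 eta2) vI /\
    is_max_value (dep_profit2_ent theta c wL eta1 eta2t) vE /\
    vE <= vI.

Definition eta_thr (theta c k w : R) : R :=
  k * (theta - w) / (2 * c - k * (theta - w)).

Definition alpha1_cf (theta c w1 eta1 : R) : R :=
  (1 + eta1) * (theta - w1) / (2 * c).

Definition alpha2_cf (theta c k wL etabar w1 eta1 : R) : R :=
  (1 + k * alpha1_cf theta c w1 eta1) * (1 + etabar) * (theta - wL) / (2 * c).

Definition pi_win (theta c k wL etabar w1 eta1 : R) : R :=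
  w1 * alpha1_cf theta c w1 eta1 + wL * alpha2_cf theta c k wL etabar w1 eta1.

Definition pi_lose (theta c w1 eta1 : R) : R :=
  w1 * alpha1_cf theta c w1 eta1.

(* Main.v *)
Require Import Defs.
From Stdlib Require Import Reals Lra.
Open Scope R_scope.

Lemma quad_id b c A Q : 0 < A -> 0 < c ->
  b*Q - c*Q^2/A = b^2*A/(4*c) - c*(Q - b*A/(2*c))^2/A.
Proof. intros; field; lra. Qed.

Lemma quad_le b c A Q : 0 < A -> 0 < c -> b*Q - c*Q^2/A <= b^2*A/(4*c).
Proof.
  intros HA Hc. rewrite (quad_id b c A Q HA Hc).
  assert (0 <= c*(Q - b*A/(2*c))^2/A).
  { apply Rmult_le_pos; [apply Rmult_le_pos; [lra| apply pow2_ge_0]|].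
    left; apply Rinv_0_lt_compat; lra. }
  lra.
Qed.

Lemma quad_max b c A v : 0 < A -> 0 < c -> 0 <= b ->
  is_max_value (fun Q => b*Q - c*Q^2/A) v -> v = b^2*A/(4*c).
Proof.
  intros HA Hc Hb [[Q [HQ E]] H].
  assert (H0: 0 <= b*A/(2*c)).
  { unfold Rdiv. apply Rmult_le_pos; [apply Rmult_le_pos; lra|].
    left; apply Rinv_0_lt_compat; lra. }
  specialize (H _ H0). rewrite (quad_id b c A _ HA Hc) in H.
  replace (b*A/(2*c) - b*A/(2*c)) with 0 in H by ring.
  assert (v <= b^2*A/(4*c)) by (rewrite <- E; apply quad_le; auto).
  replace (c * 0 ^ 2 / A) with 0 in H by (field; lra). lra.
Qed.

Lemma quad_ismax b c A : 0 < A -> 0 < c -> 0 <= b ->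
  is_max_value (fun Q => b*Q - c*Q^2/A) (b^2*A/(4*c)).
Proof.
  intros HA Hc Hb. split.
  - exists (b*A/(2*c)). split.
    + unfold Rdiv. apply Rmult_le_pos; [apply Rmult_le_pos; lra|].
      left; apply Rinv_0_lt_compat; lra.
    + field; lra.
  - intros; apply quad_le; auto.
Qed.

Lemma quad_opt b c A Q : 0 < A -> 0 < c -> 0 <= b ->
  is_optimal (fun Q => b*Q - c*Q^2/A) Q -> Q = b*A/(2*c).
Proof.
  intros HA Hc Hb [HQ H].
  assert (H0: 0 <= b*A/(2*c)).
  { unfold Rdiv. apply Rmult_le_pos; [apply Rmult_le_pos; lra|].
    left; apply Rinv_0_lt_compat; lra. }
  specialize (H _ H0). rewrite !(quad_id b c A _ HA Hc) in H.
  replace (b*A/(2*c) - b*A/(2*c)) with 0 in H by ring.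
  replace (c * 0 ^ 2 / A) with 0 in H by (field; lra).
  assert (c * (Q - b * A / (2 * c)) ^ 2 / A <= 0) by lra.
  assert (0 <= (Q - b * A / (2 * c)) ^ 2) by apply pow2_ge_0.
  assert ((Q - b * A / (2 * c)) ^ 2 <= 0).
  { apply Rmult_le_reg_l with (c / A). apply Rdiv_lt_0_compat; lra.
    replace (c / A * (Q - b * A / (2 * c)) ^ 2) with (c * (Q - b * A / (2 * c)) ^ 2 / A) by (field; lra).
    lra. }
  assert ((Q - b * A / (2 * c)) ^ 2 = 0) by lra.
  nra.
Qed.

Lemma part_a (theta c wL w1 etabar k eta1 Q1 : R)
  (Htheta : 0 < theta) (Hc : 0 < c)
  (HwL : 0 <= wL) (Hw1 : wL <= w1) (HwH : w1 <= theta / 2)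
  (Hetabar : 0 < etabar) (Hk : 0 <= k)
  (Hk1 : k * (theta - wL) < 2 * c) :
  0 <= eta1 ->
  is_optimal (dep_profit1 theta c w1 eta1) Q1 ->
  (selects_incumbent theta c k wL wL Q1 eta1 etabar etabar
        <-> eta1 <= eta_thr theta c k w1).
Proof.
  intros He Hopt.
  assert (EQ1 : Q1 = (theta - w1) * (1 + eta1) / (2 * c)).
  { apply (quad_opt (theta - w1) c (1 + eta1)); try lra. exact Hopt. }
  assert (Hkw : k * (theta - w1) < 2 * c).
  { assert (k * (theta - w1) <= k * (theta - wL)) by (apply Rmult_le_compat_l; lra). lra. }
  assert (HQ1 : 0 <= Q1).
  { rewrite EQ1. unfold Rdiv. apply Rmult_le_pos; [apply Rmult_le_pos; lra|].
    left; apply Rinv_0_lt_compat; lra. }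
  assert (HkQ : 0 <= k * Q1) by (apply Rmult_le_pos; lra).
  assert (HA : 0 < (1 + k * Q1) * (1 + etabar)) by nra.
  assert (HB : 0 < (1 + eta1) * (1 + etabar)) by nra.
  assert (Hsel : selects_incumbent theta c k wL wL Q1 eta1 etabar etabar <-> 1 + eta1 <= 1 + k * Q1).
  { unfold selects_incumbent. split.
    - intros [vI [vE [H1 [H2 H3]]]].
      apply quad_max in H1; try lra. apply quad_max in H2; try lra.
      subst vI vE.
      assert (Hp : 0 < (theta - wL)^2 / (4*c) * (1 + etabar)).
      { apply Rmult_lt_0_compat; [|lra]. apply Rdiv_lt_0_compat; [|lra].
        apply pow_lt; lra. }
      apply Rmult_le_reg_l with ((theta - wL)^2 / (4*c) * (1 + etabar)); auto.
      replace ((theta - wL)^2 / (4*c) * (1 + etabar) * (1 + eta1)) with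
        ((theta - wL) ^ 2 * ((1 + eta1) * (1 + etabar)) / (4 * c)) by (field; lra).
      replace ((theta - wL)^2 / (4*c) * (1 + etabar) * (1 + k*Q1)) with
        ((theta - wL) ^ 2 * ((1 + k*Q1) * (1 + etabar)) / (4 * c)) by (field; lra).
      exact H3.
    - intros H. exists ((theta - wL) ^ 2 * ((1 + k*Q1) * (1 + etabar)) / (4 * c)),
        ((theta - wL) ^ 2 * ((1 + eta1) * (1 + etabar)) / (4 * c)).
      split; [apply quad_ismax; lra|]. split; [apply quad_ismax; lra|].
      unfold Rdiv. apply Rmult_le_compat_r; [left; apply Rinv_0_lt_compat; lra|].
      apply Rmult_le_compat_l; [apply pow2_ge_0|].
      apply Rmult_le_compat_r; lra. }
  rewrite Hsel. unfold eta_thr. rewrite EQ1.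
  assert (Hd : 0 < 2 * c - k * (theta - w1)) by lra.
  split; intro H.
  - apply Rmult_le_reg_r with (2 * c - k * (theta - w1)); auto.
    replace (k * (theta - w1) / (2 * c - k * (theta - w1)) * (2 * c - k * (theta - w1)))
      with (k * (theta - w1)) by (field; lra).
    apply Rmult_le_compat_l with (r := 2*c) in H; [|lra].
    replace (2 * c * (1 + k * ((theta - w1) * (1 + eta1) / (2 * c))))
      with (2*c + k*(theta - w1)*(1+eta1)) in H by (field; lra).
    nra.
  - apply Rmult_le_compat_r with (r := 2 * c - k * (theta - w1)) in H; [|lra].
    replace (k * (theta - w1) / (2 * c - k * (theta - w1)) * (2 * c - k * (theta - w1)))
      with (k * (theta - w1)) in H by (field; lra).
    apply Rmult_le_reg_l with (2*c); [lra|].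
    replace (2 * c * (1 + k * ((theta - w1) * (1 + eta1) / (2 * c))))
      with (2*c + k*(theta - w1)*(1+eta1)) by (field; lra).
    nra.
Qed.

Theorem lemma1 (theta c wL wH etabar k : R)
  (Htheta : 0 < theta) (Hc : 0 < c)
  (HwL : 0 <= wL) (HwLH : wL <= wH) (HwH : wH <= theta / 2)
  (Hetabar : 0 < etabar) (Hk : 0 <= k)
  (Hk1 : k <= 2 * c * etabar / ((1 + etabar) * (theta - wL)))
  (Hk2 : k <= 2 * c * (2 * theta - wH - wL) * (wH - wL)
              / ((theta - wH) ^ 2 * (theta - wL))) :
  (* (a) *)
  eta_thr theta c k wH <= eta_thr theta c k wL /\
  (forall eta1 Q1, 0 <= eta1 <= etabar ->
     is_optimal (dep_profit1 theta c wH eta1) Q1 ->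
     (selects_incumbent theta c k wL wL Q1 eta1 etabar etabar
        <-> eta1 <= eta_thr theta c k wH)) /\
  (forall eta1 Q1, 0 <= eta1 <= etabar ->
     is_optimal (dep_profit1 theta c wL eta1) Q1 ->
     (selects_incumbent theta c k wL wL Q1 eta1 etabar etabar
        <-> eta1 <= eta_thr theta c k wL)) /\
  (* (b) *)
  (forall w1, (w1 = wH \/ w1 = wL) ->
     forall x y, 0 <= x -> x <= y -> y <= etabar ->
       pi_win theta c k wL etabar w1 x <= pi_win theta c k wL etabar w1 y /\
       pi_lose theta c w1 x <= pi_lose theta c w1 y).
Proof.
  assert (HkL : k * (theta - wL) < 2 * c).
  { apply Rmult_le_compat_r with (r := theta - wL) in Hk1; [|lra].
    replace (2 * c * etabar / ((1 + etabar) * (theta - wL)) * (theta - wL))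
      with (2 * c * (etabar / (1 + etabar))) in Hk1 by (field; lra).
    assert (etabar / (1 + etabar) < 1).
    { apply Rmult_lt_reg_r with (1 + etabar); [lra|].
      replace (etabar / (1 + etabar) * (1 + etabar)) with etabar by (field; lra). lra. }
    nra. }
  split; [|split; [|split]].
  - unfold eta_thr.
    assert (k * (theta - wH) <= k * (theta - wL)) by (apply Rmult_le_compat_l; lra).
    assert (0 <= k * (theta - wH)) by (apply Rmult_le_pos; lra).
    assert (HdH : 0 < 2 * c - k * (theta - wH)) by lra.
    assert (HdL : 0 < 2 * c - k * (theta - wL)) by lra.
    unfold Rdiv. apply Rmult_le_reg_r with ((2 * c - k * (theta - wH)) * (2 * c - k * (theta - wL))).
    nra.
    replace (k * (theta - wH) * / (2 * c - k * (theta - wH)) *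
      ((2 * c - k * (theta - wH)) * (2 * c - k * (theta - wL)))) with
      (k * (theta - wH) * (2 * c - k * (theta - wL))) by (field; lra).
    replace (k * (theta - wL) * / (2 * c - k * (theta - wL)) *
      ((2 * c - k * (theta - wH)) * (2 * c - k * (theta - wL)))) with
      (k * (theta - wL) * (2 * c - k * (theta - wH))) by (field; lra).
    nra.
  - intros eta1 Q1 [H0 H1] Ho. eapply part_a; eauto; lra.
  - intros eta1 Q1 [H0 H1] Ho. eapply part_a; eauto; lra.
  - intros w1 Hw x y Hx Hxy Hy.
    assert (wL <= w1 /\ w1 <= theta / 2) by (destruct Hw; subst; lra).
    assert (Hl : pi_lose theta c w1 x <= pi_lose theta c w1 y).
    { unfold pi_lose, alpha1_cf. unfold Rdiv.
      apply Rmult_le_compat_l; [lra|].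
      apply Rmult_le_compat_r; [left; apply Rinv_0_lt_compat; lra|].
      apply Rmult_le_compat_r; lra. }
    split; auto.
    unfold pi_win. fold (pi_lose theta c w1 x). fold (pi_lose theta c w1 y).
    apply Rplus_le_compat; auto.
    apply Rmult_le_compat_l; [lra|].
    unfold alpha2_cf, Rdiv.
    apply Rmult_le_compat_r; [left; apply Rinv_0_lt_compat; lra|].
    apply Rmult_le_compat_r; [lra|].
    apply Rmult_le_compat_r; [lra|].
    apply Rplus_le_compat_l. apply Rmult_le_compat_l; [lra|].
    unfold alpha1_cf, Rdiv.
    apply Rmult_le_compat_r; [left; apply Rinv_0_lt_compat; lra|].
    apply Rmult_le_compat_r; lra.
Qed.
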